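(* Let $n,r\ge1$ and $\mathbf U^0=\mathbb Q(v)[K_1^{\pm1},\dots,K_n^{\pm1}]$. The ideal of $\mathbf U^0$ generated by $$I_r=\{1-\textstyle\sum_{\lambda\in\Lambda(n,r)}\mathfrak L_\lambda\}\cup\{\mathfrak L_\lambda\mathfrak L_\mu-\delta_{\lambda,\mu}\mathfrak L_\lambda\mid\lambda,\mu\in\Lambda(n,r)\}\cup\{K_i\mathfrak L_\lambda-v^{\lambda_i}\mathfrak L_\lambda\mid 1\le i\le n,\ \lambda\in\Lambda(n,r)\}$$ coincides with the ideal generated by $$J_r=\{K_1K_2\cdots K_n-v^r\}\cup\{[K_i;r+1]^!\mid 1\le i\le n\}.$$
   Context: $\Lambda(n,r)$ is the set of compositions $\lambda=(\lambda_1,\dots,\lambda_n)\in\mathbb N^n$ with $\sum\lambda_i=r$. For an invertible element $X$ and integers $a$, $t\ge1$: $\left[{X;a\atop t}\right]=\prod_{s=1}^t\frac{Xv^{a-s+1}-X^{-1}v^{-a+s-1}}{v^s-v^{-s}}$ and $\left[{X;a\atop 0}\right]=1$. For $\mu\in\mathbb N^n$, $\mathfrak L_\mu=\prod_{i=1}^n\left[{K_i;0\atop\mu_i}\right]$, and $[K_i;r+1]^!=(K_i-1)(K_i-v)\cdots(K_i-v^r)$. *)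

(* Defs.v *)
From HB Require Import structures.
From mathcomp Require Import all_boot all_order all_algebra.
From mathcomp Require Import fraction.
From mathcomp Require Import mpoly.

Set Implicit Arguments.
Unset Strict Implicit.
Unset Printing Implicit Defensive.

Import GRing.Theory.
Local Open Scope ring_scope.
Local Notation "x %:F" := (@FracField.tofrac _ x).

Definition Qv : fieldType := {fraction {poly rat}}.
Definition vQ : Qv := ('X)%:F.

(* The ambient field Q(v)(K_1,...,K_n) = Frac(Q(v)[K_1,...,K_n]).
   U^0 = Q(v)[K_1^{±1},...,K_n^{±1}] is realised as its subring of
   elements p / (K_1...K_n)^m with p a polynomial. *)
Definition FF (n : nat) : fieldType := {fraction {mpoly Qv[n]}}.

Definition vv (n : nat) : FF n := (vQ%:MP)%:F.
Definition KK (n : nat) (i : 'I_n) : FF n := ('X_i)%:F.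

Definition inU0 (n : nat) (f : FF n) : Prop :=
  exists (p : {mpoly Qv[n]}) (m : nat),
    f = p%:F / (\prod_(i < n) KK i) ^+ m.

Definition ideal_gen (n : nat) (S : FF n -> Prop) (x : FF n) : Prop :=
  exists (k : nat) (a g : 'I_k -> FF n),
    (forall j, inU0 (a j) /\ S (g j)) /\ x = \sum_(j < k) a j * g j.

Definition qbin (n : nat) (X : FF n) (a : int) (t : nat) : FF n :=
  \prod_(1 <= s < t.+1)
     ((X * vv n ^ (a - s%:Z + 1) - X^-1 * vv n ^ (- a + s%:Z - 1))
        / (vv n ^ (s%:Z) - vv n ^ (- s%:Z))).

(* compositions of r into n parts: lambda : 'I_n -> 'I_r.+1 with sum r
   (every part of a composition of r is <= r, so this is Lambda(n,r)) *)
Definition comp (n r : nat) := {ffun 'I_n -> 'I_r.+1}.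
Definition is_comp (n r : nat) (lam : comp n r) : bool :=
  \sum_(i < n) (lam i : nat) == r.

Definition frakL (n r : nat) (mu : comp n r) : FF n :=
  \prod_(i < n) qbin (KK i) 0 (mu i).

(* [K_i; r+1]^! = (K_i - 1)(K_i - v)...(K_i - v^r) *)
Definition Kfact (n : nat) (i : 'I_n) (r : nat) : FF n :=
  \prod_(s < r.+1) (KK i - vv n ^+ s).

Definition Iset (n r : nat) (x : FF n) : Prop :=
  x = 1 - \sum_(lam : comp n r | is_comp lam) frakL lam
  \/ (exists lam mu : comp n r, [/\ is_comp lam, is_comp mu &
        x = frakL lam * frakL mu - (lam == mu)%:R * frakL lam])
  \/ (exists (i : 'I_n) (lam : comp n r), is_comp lam /\
        x = KK i * frakL lam - vv n ^+ (lam i : nat) * frakL lam).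

Definition Jset (n r : nat) (x : FF n) : Prop :=
  x = \prod_(i < n) KK i - vv n ^+ r
  \/ (exists i : 'I_n, x = Kfact i r).

(* Main.v *)
Require Import Defs.
From HB Require Import structures.
From mathcomp Require Import all_boot all_order all_algebra.
From mathcomp Require Import fraction.
From mathcomp Require Import mpoly.
From mathcomp Require Import ring zify.

Set Implicit Arguments.
Unset Strict Implicit.
Unset Printing Implicit Defensive.
Import GRing.Theory.
Local Open Scope ring_scope.
Local Notation "x %:F" := (@FracField.tofrac _ x).

Section U0.
Variable n : nat.
Local Notation F := (FF n).

Definition iq (c : Qv) : F := (c%:MP)%:F.
Lemma iqD c d : iq (c + d) = iq c + iq d.
Proof. by rewrite /iq mpolyCD tofracD. Qed.
Lemma iqB c d : iq (c - d) = iq c - iq d.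
Proof. by rewrite /iq mpolyCB tofracB. Qed.
Lemma iqM c d : iq (c * d) = iq c * iq d.
Proof. by rewrite /iq mpolyCM tofracM. Qed.
Lemma iq1 : iq 1 = 1.
Proof. by rewrite /iq mpolyC1 tofrac1. Qed.
Lemma iq0 : iq 0 = 0.
Proof. by rewrite /iq mpolyC0 tofrac0. Qed.
Lemma iq_eq0 c : (iq c == 0) = (c == 0).
Proof. by rewrite /iq tofrac_eq0 mpolyC_eq0. Qed.
Lemma iqV c : iq (c^-1) = (iq c)^-1.
Proof.
have [->|c0] := eqVneq c 0; first by rewrite invr0 iq0 invr0.
have ic0 : iq c != 0 by rewrite iq_eq0.
apply: (mulfI ic0); rewrite -iqM divff // mulfV // iq1.
Qed.
Lemma iqX c k : iq (c ^+ k) = iq c ^+ k.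
Proof. by elim: k => [|k IH]; rewrite ?expr0 ?iq1 // !exprS iqM IH. Qed.

Definition isS (x : F) := exists c, x = iq c.
Lemma isS_iota c : isS (iq c). Proof. by exists c. Qed.
Lemma isSD x y : isS x -> isS y -> isS (x + y).
Proof. by move=> [c ->] [d ->]; exists (c + d); rewrite iqD. Qed.
Lemma isSB x y : isS x -> isS y -> isS (x - y).
Proof. by move=> [c ->] [d ->]; exists (c - d); rewrite iqB. Qed.
Lemma isSM x y : isS x -> isS y -> isS (x * y).
Proof. by move=> [c ->] [d ->]; exists (c * d); rewrite iqM. Qed.
Lemma isSV x : isS x -> isS (x^-1).
Proof. by move=> [c ->]; exists (c^-1); rewrite iqV. Qed.
Lemma isS1 : isS 1. Proof. by exists 1; rewrite iq1. Qed.
Lemma isS0 : isS 0. Proof. by exists 0; rewrite iq0. Qed.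
Lemma isSn k : isS k%:R.
Proof. by elim: k => [|k IH]; [apply: isS0 | rewrite -addn1 natrD; apply: isSD IH isS1]. Qed.
Lemma isSX x k : isS x -> isS (x ^+ k).
Proof. by move=> [c ->]; exists (c ^+ k); rewrite iqX. Qed.
Lemma isSXz x (z : int) : isS x -> isS (x ^ z).
Proof. by case: z => k Sx /=; [apply: isSX | apply/isSV/isSX]. Qed.
Lemma isS_vv : isS (vv n). Proof. by exists vQ. Qed.
Lemma isS_prod (I : Type) (s : seq I) (P : pred I) (G : I -> F) :
  (forall i, P i -> isS (G i)) -> isS (\prod_(i <- s | P i) G i).
Proof. by move=> H; apply: big_ind => //; [apply: isS1 | apply: isSM]. Qed.

Definition Dp : {mpoly Qv[n]} := \prod_(i < n) 'X_i.
Lemma DpE : Dp%:F = \prod_(i < n) KK i.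
Proof. by rewrite /Dp rmorph_prod. Qed.
Lemma Xi_neq0 (i : 'I_n) : ('X_i : {mpoly Qv[n]}) != 0.
Proof.
apply/eqP => h; have := congr1 (meval (fun _ => (1 : Qv))) h.
rewrite meval0 mevalX big1 => [|j _]; last by rewrite expr1n.
move=> h1; move: (@oner_neq0 Qv); by rewrite h1 eqxx.
Qed.
Lemma KK_neq0 (i : 'I_n) : KK i != 0.
Proof. by rewrite /KK tofrac_eq0 Xi_neq0. Qed.
Lemma Dp_neq0 : Dp%:F != 0 :> F.
Proof. by rewrite DpE; apply/prodf_neq0 => i _; apply: KK_neq0. Qed.

Lemma inU0_tofrac (p : {mpoly Qv[n]}) : @inU0 n (p%:F : F).
Proof. by exists p, 0%N; rewrite expr0 divr1. Qed.
Lemma inU0S x : isS x -> @inU0 n x.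
Proof. by move=> [c ->]; apply: inU0_tofrac. Qed.
Lemma inU0D x y : @inU0 n x -> @inU0 n y -> @inU0 n (x + y).
Proof.
move=> [p [m ->]] [q [k ->]]; exists (p * Dp ^+ k + q * Dp ^+ m), (m + k)%N.
rewrite -DpE tofracD !tofracM !tofracXn; have D0 := Dp_neq0.
by rewrite addf_div ?expf_neq0 // exprD.
Qed.
Lemma inU0M x y : @inU0 n x -> @inU0 n y -> @inU0 n (x * y).
Proof.
move=> [p [m ->]] [q [k ->]]; exists (p * q), (m + k)%N.
by rewrite -DpE !tofracM mulf_div exprD.
Qed.
Lemma inU0N x : @inU0 n x -> @inU0 n (- x).
Proof. move=> [p [m ->]]; exists (- p), m; by rewrite tofracN mulNr. Qed.
Lemma inU0B x y : @inU0 n x -> @inU0 n y -> @inU0 n (x - y).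
Proof. by move=> ? ?; apply: inU0D => //; apply: inU0N. Qed.
Lemma inU0K i : @inU0 n (KK i). Proof. exact: inU0_tofrac. Qed.
Lemma inU0KV i : @inU0 n ((KK i)^-1).
Proof.
exists (\prod_(j < n | j != i) 'X_j), 1%N.
rewrite expr1 -DpE /Dp [X in _ / X%:F](bigD1 i) //= tofracM -/(KK i).
have Ki := KK_neq0 i.
have P0 : (\prod_(j < n | j != i) 'X_j)%:F != 0 :> F.
  by rewrite tofrac_eq0; apply/prodf_neq0 => j _; apply: Xi_neq0.
by rewrite invfM mulrCA mulfV // mulr1.
Qed.
Lemma inU0_prod (I : Type) (s : seq I) (P : pred I) (G : I -> F) :
  (forall i, P i -> @inU0 n (G i)) -> @inU0 n (\prod_(i <- s | P i) G i).
Proof. move=> H; apply: big_ind => //; [apply: inU0S isS1 | apply: inU0M]. Qed.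
Lemma inU0_sum (I : Type) (s : seq I) (P : pred I) (G : I -> F) :
  (forall i, P i -> @inU0 n (G i)) -> @inU0 n (\sum_(i <- s | P i) G i).
Proof. move=> H; apply: big_ind => //; [apply: inU0S isS0 | apply: inU0D]. Qed.

End U0.

Section Ideal.
Variable n : nat.
Local Notation F := (FF n).
Variable S : F -> Prop.
Local Notation Id := (ideal_gen S).

Lemma id0 : Id 0.
Proof. by exists 0%N, (fun _ => 0), (fun _ => 0); split=> [[]//|]; rewrite big_ord0. Qed.
Lemma idG g : S g -> Id g.
Proof.
move=> Sg; exists 1%N, (fun _ => 1), (fun _ => g); split.
  by move=> _; split=> //; apply: inU0S; apply: isS1.
by rewrite big_ord1 mul1r.
Qed.
Lemma idD x y : Id x -> Id y -> Id (x + y).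
Proof.
move=> [k1 [a1 [g1 [H1 ->]]]] [k2 [a2 [g2 [H2 ->]]]].
exists (k1 + k2)%N,
  (fun j => match split j with inl j1 => a1 j1 | inr j2 => a2 j2 end),
  (fun j => match split j with inl j1 => g1 j1 | inr j2 => g2 j2 end).
split.
  by move=> j; case: (split j) => j'; [apply: H1 | apply: H2].
rewrite big_split_ord /=; congr (_ + _); apply: eq_bigr => j _.
  by rewrite (unsplitK (inl j) : split (lshift k2 j) = inl j).
by rewrite (unsplitK (inr j) : split (rshift k1 j) = inr j).
Qed.
Lemma idM c x : @inU0 n c -> Id x -> Id (c * x).
Proof.
move=> Uc [k [a [g [H ->]]]]; exists k, (fun j => c * a j), g; split.
  by move=> j; have [? ?] := H j; split=> //; apply: inU0M.
by rewrite mulr_sumr; apply: eq_bigr => j _; rewrite mulrA.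
Qed.
Lemma idN x : Id x -> Id (- x).
Proof.
move=> Ix; rewrite -mulN1r -[-1]sub0r; apply: idM Ix; apply: inU0S; apply: isSB; [apply: isS0 | apply: isS1].
Qed.
Lemma idB x y : Id x -> Id y -> Id (x - y).
Proof. by move=> ? ?; apply: idD => //; apply: idN. Qed.
Lemma id_sum (I : Type) (s : seq I) (P : pred I) (G : I -> F) :
  (forall i, P i -> Id (G i)) -> Id (\sum_(i <- s | P i) G i).
Proof. by move=> H; apply: big_ind => //; [apply: id0 | apply: idD]. Qed.
Lemma id_eq x y : x = y -> Id x -> Id y. Proof. by move=> ->. Qed.

Definition act (X a E : F) := Id (X * E - a * E).
Lemma act_const c E : act c c E.
Proof. by rewrite /act subrr; apply: id0. Qed.
Lemma act_add X Y a b E : act X a E -> act Y b E -> act (X + Y) (a + b) E.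
Proof.
move=> h1 h2; apply: id_eq (idD h1 h2); rewrite !mulrDl; ring.
Qed.
Lemma act_sub X Y a b E : act X a E -> act Y b E -> act (X - Y) (a - b) E.
Proof.
move=> h1 h2; apply: id_eq (idB h1 h2); rewrite !mulrBl; ring.
Qed.
Lemma act_mul X Y a b E : @inU0 n X -> @inU0 n b ->
  act X a E -> act Y b E -> act (X * Y) (a * b) E.
Proof.
move=> UX Ub h1 h2; apply: id_eq (idD (idM UX h2) (idM Ub h1)); ring.
Qed.
Definition actU X a E := [/\ act X a E, @inU0 n X & @inU0 n a].
Lemma act_prod (I : Type) (s : seq I) (P : pred I) (X a : I -> F) E :
  (forall i, P i -> actU (X i) (a i) E) ->
  actU (\prod_(i <- s | P i) X i) (\prod_(i <- s | P i) a i) E.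
Proof.
move=> H; apply: (big_ind2 (fun x y => actU x y E)) => //.
  by split; [apply: act_const | apply: inU0S; apply: isS1 | apply: inU0S; apply: isS1].
move=> x1 x2 y1 y2 [h1 u1 v1] [h2 u2 v2]; split; try by apply: inU0M.
exact: act_mul.
Qed.

End Ideal.

Section Gen.
Variable K : fieldType.
Variable v : K.
Hypothesis v0 : v != 0.
Hypothesis w_inj : forall a b : nat, v ^+ a = v ^+ b -> a = b.

Lemma w_neq a b : a != b -> v ^+ a - v ^+ b != 0.
Proof. by move=> ab; rewrite subr_eq0; apply/eqP => /w_inj/eqP; rewrite (negbTE ab). Qed.

Definition qbinK (X : K) (a : int) (t : nat) : K :=
  \prod_(1 <= s < t.+1)
     ((X * v ^ (a - s%:Z + 1) - X^-1 * v ^ (- a + s%:Z - 1))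
        / (v ^ (s%:Z) - v ^ (- s%:Z))).

Definition hh (z : int) : K := v ^ z - v ^ (- z).
Lemma hh0 : hh 0 = 0. Proof. by rewrite /hh oppr0 subrr. Qed.
Lemma hh_neq0 (s : nat) : (0 < s)%N -> hh s != 0.
Proof.
move=> s0; rewrite /hh -exprnP -exprnN subr_eq0; apply/eqP => h.
have vs0 : v ^+ s != 0 by rewrite expf_neq0.
have : v ^+ s * v ^+ s = v ^+ 0 by rewrite {2}h mulfV // expr0.
rewrite -exprD => /w_inj; case: s s0 {h vs0} => // s _; by rewrite addSn.
Qed.

Lemma qbin_fac (m : nat) (s : nat) :
  (v ^+ m * v ^ (0 - s%:Z + 1) - (v ^+ m)^-1 * v ^ (- 0 + s%:Z - 1)) /
    (v ^ (s%:Z) - v ^ (- s%:Z)) = hh (m%:Z - s%:Z + 1) / hh s.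
Proof.
rewrite /hh.
have e1 : v ^+ m * v ^ (0 - s%:Z + 1) = v ^ (m%:Z - s%:Z + 1).
  by rewrite exprnP -expfzDr //; congr (v ^ _); lia.
have e2 : (v ^+ m)^-1 * v ^ (- 0 + s%:Z - 1) = v ^ (- (m%:Z - s%:Z + 1)).
  by rewrite exprnN -expfzDr //; congr (v ^ _); lia.
by rewrite e1 e2.
Qed.

Lemma qbinE (m t : nat) :
  qbinK (v ^+ m) 0 t = \prod_(1 <= s < t.+1) (hh (m%:Z - s%:Z + 1) / hh s).
Proof. by apply: eq_bigr => s _; rewrite qbin_fac. Qed.

Lemma qbin_lt (m t : nat) : (m < t)%N -> qbinK (v ^+ m) 0 t = 0.
Proof.
move=> mt; rewrite qbinE; apply/eqP; rewrite prodf_seq_eq0; apply/hasP.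
exists m.+1; first by rewrite mem_index_iota.
have -> : (m%:Z - m.+1%:Z + 1) = 0 by lia.
by rewrite hh0 mul0r eqxx.
Qed.

Lemma qbin_eq (m : nat) : qbinK (v ^+ m) 0 m = 1.
Proof.
rewrite qbinE big_split /= prodfV.
have -> : \prod_(1 <= s < m.+1) hh (m%:Z - s%:Z + 1) = \prod_(1 <= s < m.+1) hh s.
  rewrite big_nat_rev; apply: eq_big_nat => i /andP [i1 im].
  congr hh; lia.
apply: mulfV; rewrite prodf_seq_neq0; apply/allP => s; rewrite mem_index_iota.
by case/andP => s1 _; apply: hh_neq0.
Qed.

Definition ee (r : nat) (a : 'I_r.+1) (x : K) : K :=
  \prod_(s < r.+1 | s != a) ((x - v ^+ s) / (v ^+ a - v ^+ s)).

Lemma ee_at (r : nat) (a b : 'I_r.+1) : ee a (v ^+ b) = (a == b)%:R.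
Proof.
have [<-|ab] := eqVneq a b.
  rewrite /ee big1 // => s sa; apply: divff; apply: w_neq.
  by apply: contra sa => /eqP/val_inj ->.
apply/eqP; rewrite prodf_seq_eq0; apply/hasP; exists b; first by rewrite mem_index_enum.
by rewrite eq_sym ab subrr mul0r eqxx.
Qed.

Lemma lagrange (r : nat) (x : K) : \sum_(a < r.+1) ee a x = 1.
Proof.
pose P : {poly K} := \sum_(a < r.+1) \prod_(s < r.+1 | s != a)
   (('X - (v ^+ s)%:P) * ((v ^+ a - v ^+ s)^-1)%:P).
have PE y : P.[y] = \sum_(a < r.+1) ee a y.
  rewrite horner_sum; apply: eq_bigr => a _; rewrite horner_prod.
  by apply: eq_bigr => s _; rewrite hornerM hornerXsubC hornerC.
suff PE1 : P = 1 by rewrite -PE PE1 hornerC.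
have sP : (size (P - 1)%R <= r.+1)%N.
  apply: leq_trans (size_polyD _ _) _; rewrite size_polyN size_poly1 geq_max andbT.
  apply: (big_ind (fun p : {poly K} => (size p <= r.+1)%N)) => //.
    by rewrite size_poly0.
    by move=> p q hp hq; apply: leq_trans (size_polyD _ _) _; rewrite geq_max hp hq.
  move=> a _; apply: leq_trans (size_poly_prod_leq _ _) _.
  rewrite (eq_bigr (fun _ => 2%N)); last first.
    move=> s sa; rewrite mulrC mul_polyC size_scale ?size_XsubC //.
    rewrite invr_eq0; apply: w_neq; by apply: contra sa => /eqP/val_inj ->.
  rewrite sum_nat_const cardC1 card_ord /=; lia.
apply/eqP; rewrite -subr_eq0; apply/negPn/negP => nz.
have := max_poly_roots nz (rs := [seq v ^+ b | b <- iota 0 r.+1]).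
rewrite size_map size_iota map_inj_uniq ?iota_uniq; last by move=> ? ? /w_inj.
move=> H; suff : (r.+1 < r.+1)%N by rewrite ltnn.
apply: leq_trans sP; apply: H => //; apply/allP => y /mapP [b]; rewrite mem_iota add0n /= => hb ->.
rewrite /root hornerD hornerN hornerC PE.
rewrite (bigD1 (Ordinal hb)) //= big1 => [|a /negbTE ab]; last by have := ee_at a (Ordinal hb); rewrite ab.
have := ee_at (Ordinal hb) (Ordinal hb); rewrite eqxx /= => ->.
by rewrite addr0 subrr.
Qed.

End Gen.

Section VV.
Variable n : nat.
Lemma vv_neq0 : vv n != 0.
Proof. by rewrite /vv -/(iq n vQ) iq_eq0 /vQ tofrac_eq0 polyX_eq0. Qed.
Lemma vv_inj a b : vv n ^+ a = vv n ^+ b -> a = b.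
Proof.
rewrite /vv -/(iq n vQ) -!iqX => /eqP; rewrite -subr_eq0 -iqB iq_eq0 subr_eq0.
rewrite /vQ -!tofracXn tofrac_eq => /eqP h; have := congr1 (fun p : {poly rat} => size p) h.
by rewrite !size_polyXn => -[].
Qed.
Lemma qbinKE (X : FF n) a t : qbin X a t = qbinK (vv n) X a t.
Proof. by []. Qed.
Lemma inv_act_eq (K0 : fieldType) (k x e : K0) : k != 0 -> x != 0 ->
  - (k^-1 * x^-1) * (k * e - x * e) = k^-1 * e - x^-1 * e.
Proof.
move=> k0 x0; apply/eqP; rewrite -subr_eq0; apply/eqP.
have -> : - (k^-1 * x^-1) * (k * e - x * e) - (k^-1 * e - x^-1 * e) =
  (1 - k^-1 * k) * (x^-1 * e) - (1 - x^-1 * x) * (k^-1 * e) by ring.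
by rewrite !mulVf // !subrr !mul0r subrr.
Qed.
Lemma scal_cancel (K0 : fieldType) (c e : K0) : c != 0 -> c^-1 * (c * e) = e.
Proof. by move=> c0; rewrite mulKf. Qed.
End VV.

Lemma ideal_sub n (S T : FF n -> Prop) x :
  (forall g, S g -> ideal_gen T g) -> ideal_gen S x -> ideal_gen T x.
Proof.
move=> H [k [a [g [Hg ->]]]]; apply: id_sum => j _; have [? ?] := Hg j.
by apply: idM => //; apply: H.
Qed.

Section Main.
Variables n r : nat.
Local Notation F := (FF n).
Local Notation v := (vv n).
Local Notation IdJ := (ideal_gen (@Jset n r)).

Lemma isSw (s : nat) : isS (v ^+ s). Proof. apply: isSX; apply: isS_vv. Qed.
Lemma inU0w (s : nat) : @inU0 n (v ^+ s). Proof. apply: inU0S; apply: isSw. Qed.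

Lemma inU0ee (a : 'I_r.+1) (i : 'I_n) : @inU0 n (ee v a (KK i)).
Proof.
apply: inU0_prod => s _; apply: inU0M; first by apply: inU0B; [apply: inU0K | apply: inU0w].
by apply: inU0S; apply: isSV; apply: isSB; apply: isSw.
Qed.

Definition EE (mu : Defs.comp n r) : F := \prod_(i < n) ee v (mu i) (KK i).

Lemma inU0EE (mu : Defs.comp n r) : @inU0 n (EE mu).
Proof. by apply: inU0_prod => i _; apply: inU0ee. Qed.

Lemma ee_split (a : 'I_r.+1) (x : F) :
  ee v a x = (\prod_(s < r.+1 | s != a) (x - v ^+ s)) *
             (\prod_(s < r.+1 | s != a) (v ^+ a - v ^+ s))^-1.
Proof. by rewrite /ee big_split /= prodfV. Qed.

Lemma F1 (mu : Defs.comp n r) (i : 'I_n) : act (@Jset n r) (KK i) (v ^+ (mu i)) (EE mu).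
Proof.
rewrite /act -mulrBl /EE (bigD1 i) //= ee_split.
set A := \prod_(s < r.+1 | s != mu i) (KK i - v ^+ s).
set B := \prod_(s < r.+1 | s != mu i) (v ^+ (mu i) - v ^+ s).
set C := \prod_(j < n | j != i) ee v (mu j) (KK j).
have KfE : Kfact i r = (KK i - v ^+ (mu i)) * A by rewrite /Kfact (bigD1 (mu i)).
have -> : (KK i - v ^+ mu i) * (A * B^-1 * C) = (B^-1 * C) * Kfact i r.
  by rewrite KfE; ring.
apply: idM; last by apply: idG; right; exists i.
apply: inU0M; last by apply: inU0_prod => j _; apply: inU0ee.
by apply: inU0S; apply: isSV; apply: isS_prod => s _; apply: isSB; apply: isSw.
Qed.

Lemma actU_F1 (mu : Defs.comp n r) (i : 'I_n) : actU (@Jset n r) (KK i) (v ^+ (mu i)) (EE mu).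
Proof. by split; [apply: F1 | apply: inU0K | apply: inU0w]. Qed.

Lemma F2 (mu : Defs.comp n r) : ~~ is_comp mu -> IdJ (EE mu).
Proof.
move=> nc.
have h1 : actU (@Jset n r) (\prod_(i < n) KK i) (\prod_(i < n) v ^+ (mu i)) (EE mu).
  by apply: act_prod => i _; apply: actU_F1.
case: h1 => h1 _ _; rewrite prodrXr in h1.
have h2 : IdJ (EE mu * (\prod_(i < n) KK i - v ^+ r)).
  by apply: idM; [apply: inU0EE | apply: idG; left].
set P := \prod_(i < n) KK i in h1 h2.
set m := (\sum_(i < n) (mu i : nat))%N in h1.
have h3 : IdJ ((v ^+ r - v ^+ m) * EE mu).
  by apply: id_eq (idB h1 h2); ring.
have nz : v ^+ r - v ^+ m != 0.
  apply: w_neq; first by apply: vv_inj.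
  by rewrite eq_sym.
have := idM (c := (v ^+ r - v ^+ m)^-1) _ h3; rewrite scal_cancel //; apply.
by apply: inU0S; apply: isSV; apply: isSB; apply: isSw.
Qed.

Lemma F3 : \sum_(mu : Defs.comp n r) EE mu = 1.
Proof.
rewrite /EE.
have := bigA_distr_bigA (fun (i : 'I_n) (a : 'I_r.+1) => ee v a (KK i)).
move=> <-.
by apply: big1 => i _; apply: lagrange; [apply: vv_neq0 | move=> a b; apply: vv_inj].
Qed.


Section ActU.
Variable S : F -> Prop.
Lemma actU_mul X Y a b E : actU S X a E -> actU S Y b E -> actU S (X * Y) (a * b) E.
Proof.
move=> [h1 u1 v1] [h2 u2 v2]; split; try by apply: inU0M.
exact: act_mul.
Qed.
Lemma actU_sub X Y a b E : actU S X a E -> actU S Y b E -> actU S (X - Y) (a - b) E.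
Proof.
move=> [h1 u1 v1] [h2 u2 v2]; split; try by apply: inU0B.
exact: act_sub.
Qed.
Lemma actU_const c E : isS c -> actU S c c E.
Proof. by move=> Sc; split; [apply: act_const | apply: inU0S | apply: inU0S]. Qed.
Lemma actU_inv X x E : actU S X x E -> X != 0 -> x != 0 -> isS x -> @inU0 n X^-1 ->
  actU S X^-1 x^-1 E.
Proof.
move=> [h u1 u2] X0 x0 Sx UXi; split=> //; last by apply: inU0S; apply: isSV.
have := idM (c := - (X^-1 * x^-1)) _ h; rewrite /act inv_act_eq //; apply.
by apply: inU0N; apply: inU0M => //; apply: inU0S; apply: isSV.
Qed.
End ActU.

Definition cc (lam mu : Defs.comp n r) : F :=
  \prod_(i < n) qbinK v (v ^+ (mu i)) 0 (lam i).

Lemma F4 (lam mu : Defs.comp n r) : actU (@Jset n r) (frakL lam) (cc lam mu) (EE mu).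
Proof.
apply: act_prod => i _; rewrite qbinKE.
have hK := actU_F1 mu i.
have hKV : actU (@Jset n r) (KK i)^-1 (v ^+ mu i)^-1 (EE mu).
  apply: actU_inv => //; first exact: KK_neq0.
  - by apply: expf_neq0; apply: vv_neq0.
  - exact: isSw.
  - exact: inU0KV.
apply: act_prod => s _.
apply: actU_mul; last by apply: actU_const; apply: isSV; apply: isSB; apply: isSXz; apply: isS_vv.
apply: actU_sub; apply: actU_mul => //; by apply: actU_const; apply: isSXz; apply: isS_vv.
Qed.

Lemma comp_eq (lam mu : Defs.comp n r) : is_comp lam -> is_comp mu ->
  (forall i, (lam i <= mu i)%N) -> lam = mu.
Proof.
move=> /eqP cl /eqP cm H.
have := leqif_sum (P := xpredT) (C := fun i => (lam i : nat) == mu i)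
  (E1 := fun i => (lam i : nat)) (E2 := fun i => (mu i : nat)) (fun i _ => leqif_eq (H i)).
move=> [_]; rewrite cl cm eqxx => /esym/forallP E.
by apply/ffunP => i; apply/val_inj/eqP; apply: (implyP (E i)).
Qed.

Lemma F5 (lam mu : Defs.comp n r) : is_comp lam -> is_comp mu ->
  cc lam mu = (lam == mu)%:R.
Proof.
move=> cl cm; have [<-|ne] := eqVneq lam mu.
  by apply: big1 => i _; apply: qbin_eq; [apply: vv_neq0 | move=> a b; apply: vv_inj].
have [i hi] : exists i, (mu i < lam i)%N.
  case: (boolP [exists i, (mu i < lam i)%N]) => [/existsP //|/existsPn H].
  move/eqP: ne; case.
  by apply: comp_eq => // i; have := H i; rewrite -leqNgt.
rewrite /cc (bigD1 i) //= (@qbin_lt _ v (@vv_neq0 n) (mu i) (lam i) hi).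
by rewrite mul0r.
Qed.


Lemma inU0frakL (lam : Defs.comp n r) : @inU0 n (frakL lam).
Proof. by case: (F4 lam lam). Qed.

Lemma EE_sum (lam : Defs.comp n r) :
  \sum_(mu : Defs.comp n r) (lam == mu)%:R * EE mu = EE lam.
Proof.
rewrite (bigD1 lam) //= eqxx mul1r big1 ?addr0 // => mu /negbTE.
by rewrite eq_sym => ->; rewrite mul0r.
Qed.

Lemma G1 (lam : Defs.comp n r) : is_comp lam -> IdJ (frakL lam - EE lam).
Proof.
move=> cl.
have -> : frakL lam - EE lam =
  \sum_(mu : Defs.comp n r) (frakL lam * EE mu - (lam == mu)%:R * EE mu).
  by rewrite sumrB -mulr_sumr F3 mulr1 EE_sum.
apply: id_sum => mu _; case: (boolP (is_comp mu)) => cm.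
  by case: (F4 lam mu); rewrite F5.
have U : @inU0 n (frakL lam - (lam == mu)%:R).
  by apply: inU0B; [apply: inU0frakL | apply: inU0S; apply: isSn].
by rewrite -mulrBl; apply: id_eq (idM U (F2 cm)); rewrite mulrC.
Qed.

Lemma bool1 : (true%:R : F) = 1. Proof. by []. Qed.
Lemma bool0 : (false%:R : F) = 0. Proof. by []. Qed.

Lemma IsubJ x : Iset r x -> IdJ x.
Proof.
case=> [->|[[lam [mu [cl cm ->]]]|[i [lam [cl ->]]]]].
- rewrite -F3 (bigID (fun mu => is_comp mu)) /=.
  set A := \sum_(i | is_comp i) EE i.
  set B := \sum_(i | ~~ is_comp i) EE i.
  set L := \sum_(lam | is_comp lam) frakL lam.
  have -> : A + B - L = B - (L - A) by ring.
  apply: idB; first by apply: id_sum => mu; apply: F2.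
  by rewrite /L /A -sumrB; apply: id_sum => mu; apply: G1.
- have [eq|ne] := eqVneq lam mu.
    subst mu; have -> : true%:R = 1 :> F by [].
    rewrite mul1r.
    have h1 := idM (inU0frakL lam) (G1 cl).
    have [h2 _ _] := F4 lam lam; rewrite F5 // eqxx bool1 in h2.
    apply: id_eq (idD h1 (idB h2 (G1 cl))); rewrite /act; ring.
  have -> : false%:R = 0 :> F by [].
  rewrite mul0r subr0.
  have h1 := idM (inU0frakL lam) (G1 cm).
  have [h2 _ _] := F4 lam mu; rewrite F5 // (negbTE ne) bool0 in h2.
  apply: id_eq (idD h1 h2); rewrite /act; ring.
- have h1 := idM (inU0K i) (G1 cl).
  have h2 := F1 lam i.
  have h3 := idM (inU0w (lam i)) (G1 cl).
  apply: id_eq (idD h1 (idB h2 h3)); rewrite /act; ring.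
Qed.

End Main.

Lemma kill_eq (R : comRingType) (I : finType) (P : pred I) (L : I -> R) (X : R) :
  X = X * (1 - \sum_(i | P i) L i) + \sum_(i | P i) (X * L i - 0 * L i).
Proof.
rewrite sumrB [X in _ + (_ - X)]big1 => [|i _]; last by rewrite mul0r.
by rewrite subr0 mulrBr mulr1 mulr_sumr subrK.
Qed.

Section Main2.
Variables n r : nat.
Local Notation F := (FF n).
Local Notation v := (vv n).
Local Notation IdI := (ideal_gen (@Iset n r)).

Lemma H1 (lam : Defs.comp n r) (i : 'I_n) : is_comp lam ->
  actU (@Iset n r) (KK i) (v ^+ (lam i)) (frakL lam).
Proof.
move=> cl; split; [|apply: inU0K | apply: inU0w].
by apply: idG; right; right; exists i, lam.
Qed.

Lemma gen1 : IdI (1 - \sum_(lam : Defs.comp n r | is_comp lam) frakL lam).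
Proof. by apply: idG; left. Qed.

Lemma killL (X : F) (a : F) : @inU0 n X ->
  (forall lam : Defs.comp n r, is_comp lam -> actU (@Iset n r) X a (frakL lam)) ->
  a = 0 -> IdI X.
Proof.
move=> UX H a0.
have -> : X = X * (1 - \sum_(lam : Defs.comp n r | is_comp lam) frakL lam) +
   \sum_(lam : Defs.comp n r | is_comp lam) (X * frakL lam - a * frakL lam).
  by rewrite a0; apply: kill_eq.
apply: idD; first by apply: idM UX gen1.
by apply: id_sum => lam cl; case: (H lam cl).
Qed.


Lemma JsubI x : Jset r x -> IdI x.
Proof.
case=> [->|[i ->]].
  have UX : @inU0 n (\prod_(i < n) KK i - v ^+ r).
    apply: inU0B; [apply: inU0_prod => i _; apply: inU0K | apply: inU0w].
  apply: (killL (a := 0)) => // lam cl.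
  have h : actU (@Iset n r) (\prod_(i < n) KK i - v ^+ r)
     (\prod_(i < n) v ^+ (lam i) - v ^+ r) (frakL lam).
    apply: actU_sub; last by apply: actU_const; apply: isSw.
    by apply: act_prod => i _; apply: H1.
  by rewrite prodrXr (eqP cl) subrr in h.
have UX : @inU0 n (Kfact i r).
  by apply: inU0_prod => s _; apply: inU0B; [apply: inU0K | apply: inU0w].
apply: (killL (a := 0)) => // lam cl.
have h : actU (@Iset n r) (Kfact i r)
   (\prod_(s < r.+1) (v ^+ (lam i) - v ^+ s)) (frakL lam).
  apply: act_prod => s _; apply: actU_sub; first by apply: H1.
  by apply: actU_const; apply: isSw.
by rewrite (bigD1 (lam i)) //= subrr mul0r in h.
Qed.

End Main2.

Theorem lemma5p1p2 (n r : nat) :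
  (1 <= n)%N -> (1 <= r)%N ->
  forall x : FF n, ideal_gen (@Iset n r) x <-> ideal_gen (@Jset n r) x.
Proof.
move=> _ _ x; split; apply: ideal_sub => g; [apply: IsubJ | apply: JsubI].
Qed.
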